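(* Let $p$ be a prime, $R=\mathbb{Z}_p[[\zeta]]$ the formal power series ring in one variable over the $p$-adic integers, and $M=R^{(m)}$ a free $R$-module of rank $m\geq 1$. Let $K$ be an $R$-submodule of $M$ such that (1) $M/(K+M\zeta)\cong\mathbb{Z}_p^{(m)}$, and (2) for all $a\in M$, if $a\zeta\in K$ then $a\in K$. Then $K=0$.
   Context: $\mathbb{Z}_p^{(m)}$ denotes the free $\mathbb{Z}_p$-module of rank $m$; the isomorphism in (1) is as $\mathbb{Z}_p$-modules. *)

(* Defs.v *)
From mathcomp Require Import all_boot.
Set Implicit Arguments. Unset Strict Implicit. Unset Printing Implicit Defensive.

(* An element of Z_p is represented by its sequence of p-adic digits:
   x = \sum_i x_i p^i with 0 <= x_i < p.  This representation is unique, so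
   Leibniz equality of digit functions is equality in Z_p.
   The digit type is 'I_p.-1.+1, which is 'I_p for p prime (p > 0). *)
Definition digit (p : nat) := 'I_p.-1.+1.
Definition Zp (p : nat) := nat -> digit p.

Definition zp_trunc p (x : Zp p) (n : nat) : nat := \sum_(i < n) x i * p ^ i.

(* the element whose truncation mod p^n is (t n mod p^n), for a coherent
   family t (t (n.+1) = t n mod p^n); digit n = (t n.+1 mod p^n.+1) / p^n *)
Definition zp_of_trunc p (t : nat -> nat) : Zp p :=
  fun n => inord ((t n.+1 %% p ^ n.+1) %/ p ^ n).

Definition zp0 p : Zp p := fun _ => ord0.
Definition zp1 p : Zp p := zp_of_trunc p (fun _ => 1).
Arguments zp0 p : clear implicits.
Arguments zp1 p : clear implicits.
Definition zp_add p (x y : Zp p) : Zp p :=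
  zp_of_trunc p (fun n => zp_trunc x n + zp_trunc y n).
Definition zp_opp p (x : Zp p) : Zp p :=
  zp_of_trunc p (fun n => p ^ n - zp_trunc x n).
Definition zp_mul p (x y : Zp p) : Zp p :=
  zp_of_trunc p (fun n => zp_trunc x n * zp_trunc y n).

Definition PS (p : nat) := nat -> Zp p.
Definition ps0 p : PS p := fun _ => zp0 p.
Arguments ps0 p : clear implicits.
Definition ps_add p (f g : PS p) : PS p := fun k => zp_add (f k) (g k).
(* Cauchy product: coefficient k is \sum_{i<=k} f_i g_{k-i} in Z_p *)
Definition ps_mul p (f g : PS p) : PS p := fun k =>
  zp_of_trunc p (fun n => \sum_(i < k.+1) zp_trunc (f i) n * zp_trunc (g (k - i)) n).
Definition ps_const p (c : Zp p) : PS p := fun k => if k == 0 then c else zp0 p.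
Definition ps_zeta p : PS p := fun k => if k == 1 then zp1 p else zp0 p.
Arguments ps_zeta p : clear implicits.

Definition FreeR (p m : nat) := 'I_m -> PS p.
Definition M0 p m : FreeR p m := fun _ => ps0 p.
Arguments M0 p m : clear implicits.
Definition M_add p m (a b : FreeR p m) : FreeR p m := fun j => ps_add (a j) (b j).
Definition M_scale p m (r : PS p) (a : FreeR p m) : FreeR p m :=
  fun j => ps_mul r (a j).
Definition M_zeta p m (a : FreeR p m) : FreeR p m :=
  fun j => ps_mul (a j) (ps_zeta p).
Definition M_zpscale p m (c : Zp p) (a : FreeR p m) : FreeR p m :=
  M_scale (ps_const c) a.

Definition FreeZp (p m : nat) := 'I_m -> Zp p.
Definition V0 p m : FreeZp p m := fun _ => zp0 p.
Arguments V0 p m : clear implicits.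
Definition V_add p m (u v : FreeZp p m) : FreeZp p m := fun j => zp_add (u j) (v j).
Definition V_scale p m (c : Zp p) (u : FreeZp p m) : FreeZp p m :=
  fun j => zp_mul c (u j).

Definition is_Rsubmodule p m (K : FreeR p m -> Prop) : Prop :=
  [/\ K (M0 p m),
      (forall a b, K a -> K b -> K (M_add a b)) &
      (forall r a, K a -> K (M_scale r a))].

Definition in_K_plus_Mzeta p m (K : FreeR p m -> Prop) (a : FreeR p m) : Prop :=
  exists k b, K k /\ a = M_add k (M_zeta b).

(* M/(K + M zeta) is isomorphic to Z_p^(m) as Z_p-modules, i.e. (first
   isomorphism theorem) there is a surjective Z_p-linear map M -> Z_p^(m)
   whose kernel is exactly K + M zeta. *)
Definition quotient_iso_Zpm p m (K : FreeR p m -> Prop) : Prop :=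
  exists phi : FreeR p m -> FreeZp p m,
    [/\ (forall a b, phi (M_add a b) = V_add (phi a) (phi b)),
        (forall c a, phi (M_zpscale c a) = V_scale c (phi a)),
        (forall v, exists a, phi a = v) &
        (forall a, phi a = V0 p m <-> in_K_plus_Mzeta K a)].

(* Main.v *)
Require Import Defs.
From HB Require Import structures.
From mathcomp Require Import all_boot ssralg matrix zify.
From mathcomp Require Import boolp.
From Stdlib Require Import FunctionalExtensionality ClassicalEpsilon.
Set Implicit Arguments. Unset Strict Implicit. Unset Printing Implicit Defensive.

Section ZpArith.
Variable p : nat.
Hypothesis hp : 0 < p.

Lemma digit_lt (d : digit p) : (d < p)%N.
Proof. by apply: leq_trans (ltn_ord d) _; rewrite prednK. Qed.

Lemma truncS (x : Zp p) n : zp_trunc x n.+1 = zp_trunc x n + x n * p ^ n.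
Proof. by rewrite /zp_trunc big_ord_recr. Qed.

Lemma trunc0 (x : Zp p) : zp_trunc x 0 = 0.
Proof. by rewrite /zp_trunc big_ord0. Qed.

Lemma trunc_lt (x : Zp p) n : zp_trunc x n < p ^ n.
Proof.
elim: n => [|n IH]; first by rewrite trunc0 expn0.
rewrite truncS expnS.
have hd := digit_lt (x n).
have : x n * p ^ n <= p.-1 * p ^ n by rewrite leq_mul2r; apply/orP; right; move: hd; set y := nat_of_ord _; lia.
have : p.-1 * p ^ n + p ^ n = p * p ^ n by case: (p) hp => // q _; rewrite mulSn addnC.
lia.
Qed.

Lemma ppos n : 0 < p ^ n. Proof. by rewrite expn_gt0 hp. Qed.

Lemma trunc_inj (x y : Zp p) : (forall n, zp_trunc x n = zp_trunc y n) -> x = y.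
Proof.
move=> h; apply: functional_extensionality => n; apply: val_inj => /=.
have := h n.+1; rewrite !truncS h => /eqP; rewrite eqn_add2l eqn_pmul2r ?ppos //.
by move/eqP.
Qed.

Definition coherent (t : nat -> nat) := forall n, t n.+1 = t n %[mod p ^ n].

Lemma trunc_of t : coherent t -> forall n, zp_trunc (zp_of_trunc p t) n = t n %% p ^ n.
Proof.
move=> ht; elim=> [|n IH]; first by rewrite trunc0 expn0 modn1.
rewrite truncS IH /zp_of_trunc /=.
set a := t n.+1 %% p ^ n.+1.
have ha : a < p ^ n.+1 by rewrite ltn_mod ppos.
have hq : a %/ p ^ n < p by rewrite ltn_divLR ?ppos // -expnS.
rewrite inordK; last by rewrite prednK.
have -> : t n %% p ^ n = a %% p ^ n.
  by rewrite /a modn_dvdm ?dvdn_exp2l // ht.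
by rewrite addnC -divn_eq.
Qed.

Lemma of_trunc_ext t t' : (forall n, t n = t' n %[mod p ^ n]) -> zp_of_trunc p t = zp_of_trunc p t'.
Proof. by move=> h; apply: functional_extensionality => n; rewrite /zp_of_trunc h. Qed.

Lemma coh_trunc (x : Zp p) : coherent (zp_trunc x).
Proof. by move=> n; rewrite truncS addnC modnMDl. Qed.

Lemma trunc_mod (x : Zp p) n : zp_trunc x n %% p ^ n = zp_trunc x n.
Proof. by rewrite modn_small // trunc_lt. Qed.

Lemma zp_ext (x y : Zp p) : (forall n, zp_trunc x n = zp_trunc y n %[mod p ^ n]) -> x = y.
Proof. by move=> h; apply: trunc_inj => n; rewrite -trunc_mod h trunc_mod. Qed.

Lemma coh_add t t' : coherent t -> coherent t' -> coherent (fun n => t n + t' n).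
Proof. by move=> h h' n /=; rewrite -modnDm h h' modnDm. Qed.
Lemma coh_mul t t' : coherent t -> coherent t' -> coherent (fun n => t n * t' n).
Proof. by move=> h h' n /=; rewrite -modnMm h h' modnMm. Qed.
Lemma coh_const c : coherent (fun _ => c). Proof. by []. Qed.

Lemma tr_add (x y : Zp p) n : zp_trunc (zp_add x y) n = (zp_trunc x n + zp_trunc y n) %% p ^ n.
Proof. by rewrite /zp_add trunc_of //; apply: coh_add; apply: coh_trunc. Qed.
Lemma tr_mul (x y : Zp p) n : zp_trunc (zp_mul x y) n = (zp_trunc x n * zp_trunc y n) %% p ^ n.
Proof. by rewrite /zp_mul trunc_of //; apply: coh_mul; apply: coh_trunc. Qed.
Lemma tr1 n : zp_trunc (zp1 p) n = 1 %% p ^ n.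
Proof. by rewrite /zp1 trunc_of. Qed.
Lemma tr0 n : zp_trunc (zp0 p) n = 0.
Proof. by rewrite /zp_trunc big1 // => i _; rewrite /zp0 /= mul0n. Qed.
Lemma tr_opp (x : Zp p) n : zp_trunc (zp_opp x) n = (p ^ n - zp_trunc x n) %% p ^ n.
Proof.
rewrite /zp_opp trunc_of // => k.
have hl : forall j, zp_trunc x j <= p ^ j by move=> j; exact: ltnW (trunc_lt _ _).
apply/eqP; rewrite -(eqn_modDr (zp_trunc x k.+1)) subnK //.
have -> : (p ^ k - zp_trunc x k + zp_trunc x k.+1) %% p ^ k = (p ^ k - zp_trunc x k + zp_trunc x k) %% p ^ k.
  by rewrite -modnDmr coh_trunc modnDmr.
by rewrite subnK // expnS modnMl modnn.
Qed.
End ZpArith.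

Lemma zp_all0 (x y : Zp 0) : x = y.
Proof.
apply: functional_extensionality => n; apply: val_inj.
by case: (x n) => [[|a] //] ; case: (y n) => [[|b] //].
Qed.

Ltac zcase := case=> [|q]; [by try red; intros; apply: zp_all0 | ].

Lemma zp_addA p : associative (@zp_add p).
Proof. move: p; zcase => x y z; apply: zp_ext => // n; by rewrite !tr_add // !modn_mod modnDml modnDmr addnA. Qed.
Lemma zp_addC p : commutative (@zp_add p).
Proof. move: p; zcase => x y; apply: zp_ext => // n; by rewrite !tr_add // addnC. Qed.
Lemma zp_add0r p : left_id (zp0 p) (@zp_add p).
Proof. move: p; zcase => x; apply: zp_ext => // n; by rewrite !tr_add // tr0 // modn_mod. Qed.
Lemma zp_addNr p : left_inverse (zp0 p) (@zp_opp p) (@zp_add p).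
Proof. move: p; zcase => x; apply: zp_ext => // n; rewrite !tr_add // tr_opp // tr0 // modn_mod modnDml.
by rewrite subnK ?mod0n ?modnn // ltnW // trunc_lt.
Qed.
Lemma zp_mulA p : associative (@zp_mul p).
Proof. move: p; zcase => x y z; apply: zp_ext => // n; by rewrite !tr_mul // !modn_mod modnMml modnMmr mulnA. Qed.
Lemma zp_mulC p : commutative (@zp_mul p).
Proof. move: p; zcase => x y; apply: zp_ext => // n; by rewrite !tr_mul // mulnC. Qed.
Lemma zp_mul1r p : left_id (zp1 p) (@zp_mul p).
Proof. move: p; zcase => x; apply: zp_ext => // n; by rewrite !tr_mul // tr1 // modn_mod modnMml mul1n. Qed.
Lemma zp_mulDl p : left_distributive (@zp_mul p) (@zp_add p).
Proof. move: p; zcase => x y z; apply: zp_ext => // n; by rewrite tr_mul // !tr_add // !tr_mul // !modn_mod modnMml modnDm mulnDl. Qed.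

HB.instance Definition _ p := gen_eqMixin (Zp p).
HB.instance Definition _ p := gen_choiceMixin (Zp p).
HB.instance Definition _ p := GRing.isZmodule.Build (Zp p) (@zp_addA p) (@zp_addC p) (@zp_add0r p) (@zp_addNr p).
HB.instance Definition _ p := GRing.Zmodule_isComPzRing.Build (Zp p) (@zp_mulA p) (@zp_mulC p) (@zp_mul1r p) (@zp_mulDl p).


Import GRing.Theory.

Lemma zp_addr0 p (x : Zp p) : zp_add x (zp0 p) = x. Proof. exact: (addr0 x). Qed.
Lemma zp_add0 p (x : Zp p) : zp_add (zp0 p) x = x. Proof. exact: (add0r x). Qed.

Lemma of_trunc0 p : zp_of_trunc p (fun _ => 0) = zp0 p.
Proof. move: p; zcase; apply: zp_ext => // n; rewrite trunc_of //. by rewrite tr0 !mod0n. Qed.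

Lemma of_truncK p (hp : 0 < p) (x : Zp p) : zp_of_trunc p (zp_trunc x) = x.
Proof. apply: zp_ext => // n; by rewrite trunc_of // ?modn_mod //; apply: coh_trunc. Qed.

Lemma ps_mul_zeta p (hp : 0 < p) (f : PS p) k :
  ps_mul f (ps_zeta p) k = if k is k'.+1 then f k' else zp0 p.
Proof.
rewrite /ps_mul; case: k => [|k].
  rewrite -(of_trunc0 p); apply: of_trunc_ext => n.
  by rewrite big_ord1 /ps_zeta /= tr0 muln0.
rewrite -[RHS](of_truncK hp); apply: of_trunc_ext => n.
rewrite big_ord_recr /= subnn /ps_zeta /= tr0 // muln0 addn0.
rewrite big_ord_recr /= subSnn /= tr1 // big1 ?add0n ?modnMmr ?muln1 //.
move=> i _ /=; have -> : (k.+1 - i == 1) = false.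
  by apply/negbTE; have := ltn_ord i; lia.
by rewrite tr0 muln0.
Qed.

Lemma ps_const_mul p (hp : 0 < p) (s c : Zp p) k :
  ps_mul (ps_const s) (ps_const c) k = if k == 0 then zp_mul s c else zp0 p.
Proof.
rewrite /ps_mul; case: k => [|k]; first by rewrite /zp_mul /=; apply: of_trunc_ext => n; rewrite big_ord1.
rewrite -(of_trunc0 p); apply: of_trunc_ext => n.
rewrite big1 // => i _; rewrite /ps_const.
case: ifP => /eqP h1; case: ifP => /eqP h2; rewrite ?tr0 ?muln0 ?mul0n //; lia.
Qed.

Section Module.
Variables (p m : nat).
Hypothesis hp : 0 < p.

Definition constM (c : FreeZp p m) : FreeR p m := fun j => ps_const (c j).
Definition shiftM (a : FreeR p m) : FreeR p m := fun j k => a j k.+1.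
Definition headV (a : FreeR p m) : FreeZp p m := fun j => a j 0.

Lemma decomp a : a = M_add (constM (headV a)) (M_zeta (shiftM a)).
Proof.
apply: functional_extensionality => j; apply: functional_extensionality => k.
rewrite /M_add /ps_add /M_zeta ps_mul_zeta //; case: k => [|k] /=.
  by rewrite zp_addr0.
by rewrite zp_add0.
Qed.

Lemma Mzeta_M0 : M_zeta (M0 p m) = M0 p m.
Proof.
apply: functional_extensionality => j; apply: functional_extensionality => k.
by rewrite /M_zeta ps_mul_zeta //; case: k.
Qed.

Lemma M_add0 a : M_add a (M0 p m) = a.
Proof.
apply: functional_extensionality => j; apply: functional_extensionality => k.
exact: zp_addr0.
Qed.

Lemma M_add0l a : M_add (M0 p m) a = a.
Proof.
apply: functional_extensionality => j; apply: functional_extensionality => k.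
exact: zp_add0.
Qed.

Lemma constM_add c d : constM (V_add c d) = M_add (constM c) (constM d).
Proof.
apply: functional_extensionality => j; apply: functional_extensionality => k.
by rewrite /constM /M_add /ps_add /ps_const; case: k => // k; rewrite zp_addr0.
Qed.

Lemma constM_scale s c : constM (V_scale s c) = M_zpscale s (constM c).
Proof.
apply: functional_extensionality => j; apply: functional_extensionality => k.
by rewrite /M_zpscale /M_scale /constM ps_const_mul //; case: k.
Qed.

Lemma constM0 : constM (V0 p m) = M0 p m.
Proof.
apply: functional_extensionality => j; apply: functional_extensionality => k.
by rewrite /constM /ps_const; case: k.
Qed.

Lemma head_zero a : headV a = V0 p m -> a = M_zeta (shiftM a).
Proof. by move=> h; rewrite {1}(decomp a) h constM0 M_add0l. Qed.
End Module.

Section Hopf.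
Local Open Scope ring_scope.
Variables (p m : nat).
Variable psi : FreeZp p m -> FreeZp p m.
Hypothesis hadd : forall c d, psi (V_add c d) = V_add (psi c) (psi d).
Hypothesis hsc : forall s c, psi (V_scale s c) = V_scale s (psi c).
Hypothesis hsur : forall v, exists c, psi c = v.

Lemma V_addE (c d : FreeZp p m) j : V_add c d j = c j + d j. Proof. by []. Qed.
Lemma V_scaleE s (c : FreeZp p m) j : V_scale s c j = s * c j. Proof. by []. Qed.

Definition ev (j : 'I_m) : FreeZp p m := fun i => if i == j then 1 else 0.
Definition Amx : 'M[Zp p]_m := \matrix_(j, i) psi (ev j) i.

Lemma psi0 : psi (V0 p m) = V0 p m.
Proof.
have h : forall v : FreeZp p m, V_scale 0 v = V0 p m.
  by move=> v; apply: functional_extensionality => i; exact: (mul0r (v i)).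
by rewrite -{1}(h (V0 p m)) hsc h.
Qed.

Definition pre n (c : FreeZp p m) : FreeZp p m := fun j => if (j < n)%N then c j else 0.

Lemma psi_pre c i n : (n <= m)%N ->
  psi (pre n c) i = \sum_(j < m | (j < n)%N) c j * Amx j i.
Proof.
elim: n => [|n IH] hn.
  have -> : pre 0 c = V0 p m by apply: functional_extensionality.
  by rewrite psi0 big_pred0.
have hnm : (n < m)%N by [].
pose o := Ordinal hnm.
have -> : pre n.+1 c = V_add (pre n c) (V_scale (c o) (ev o)).
  apply: functional_extensionality => j.
  rewrite V_addE V_scaleE /pre /ev.
  case: (ltngtP j n) => h.
  - have -> : (j == o) = false by apply/negbTE; rewrite -val_eqE /= neq_ltn h.
    by rewrite ltnS ltnW // mulr0; apply/esym/addr0.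
  - have -> : (j == o) = false by apply/negbTE; rewrite -val_eqE /= neq_ltn h orbT.
    by rewrite ltnS leqNgt h /= mulr0; apply/esym/addr0.
  - have -> : (j == o) = true by rewrite -val_eqE /= h eqxx.
    have hjo : j = o by apply: val_inj; exact: h.
    by rewrite hjo ltnSn mulr1; apply/esym/add0r.
rewrite hadd V_addE hsc V_scaleE IH; last exact: ltnW.
rewrite [in RHS](bigD1 o) /=; last by rewrite ltnSn.
rewrite addrC mxE; congr (_ + _).
apply: eq_bigl => j; by rewrite ltnS ltn_neqAle andbC -val_eqE.
Qed.

Lemma psi_lin c i : psi c i = \sum_j c j * Amx j i.
Proof.
have e : c = pre m c by apply: functional_extensionality => j; rewrite /pre ltn_ord.
rewrite {1}e psi_pre //; apply: eq_bigl => j; by rewrite ltn_ord.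
Qed.

Definition rv (c : FreeZp p m) : 'rV[Zp p]_m := \row_j c j.

Lemma psi_mx c i : psi c i = (rv c *m Amx) ord0 i.
Proof. rewrite psi_lin mxE; apply: eq_bigr => j _; by rewrite /rv !mxE. Qed.

Lemma hopf c : psi c = V0 p m -> c = V0 p m.
Proof.
move=> hc.
pose b i := proj1_sig (constructive_indefinite_description _ (hsur (ev i))).
have hb : forall i, psi (b i) = ev i.
  by move=> i; rewrite /b; case: (constructive_indefinite_description _ _).
pose B : 'M[Zp p]_m := \matrix_(i, j) b i j.
have hBA : B *m Amx = 1%:M.
  apply/matrixP => i k; rewrite !mxE.
  have -> : \sum_j B i j * Amx j k = psi (b i) k by rewrite psi_lin; apply: eq_bigr => j _; rewrite mxE.
  rewrite hb /ev eq_sym; by case: (i == k).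
have hAB := mulmx1C hBA.
have h0 : rv c *m Amx = 0.
  apply/matrixP => i k; rewrite ord1 -psi_mx hc !mxE; by [].
have : rv c = 0 by rewrite -(mulmx1 (rv c)) -hAB mulmxA h0 mul0mx.
move/matrixP => h; apply: functional_extensionality => j.
by have := h ord0 j; rewrite !mxE.
Qed.
End Hopf.

Theorem lemma5 (p m : nat) (hp : prime p) (hm : 0 < m)
  (K : FreeR p m -> Prop) (hK : is_Rsubmodule K)
  (h1 : quotient_iso_Zpm K)
  (h2 : forall a : FreeR p m, K (M_zeta a) -> K a) :
  forall a : FreeR p m, K a -> a = M0 p m.
Proof.
have hp0 : 0 < p by apply: prime_gt0.
case: hK => hK0 hKadd hKsc.
case: h1 => phi [hadd hsc hsur hker].
pose psi c := phi (constM c).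
have phi_zeta : forall b, phi (M_zeta b) = V0 p m.
  move=> b; apply/hker; exists (M0 p m), b; split => //; by rewrite M_add0l.
have Vadd0 : forall u : FreeZp p m, V_add u (V0 p m) = u.
  by move=> u; apply: functional_extensionality => j; exact: zp_addr0.
have phi_head : forall a, phi a = psi (headV a).
  by move=> a; rewrite {1}(decomp hp0 a) hadd phi_zeta Vadd0.
have hinj : forall c, psi c = V0 p m -> c = V0 p m.
  apply: hopf.
  - by move=> c d; rewrite /psi constM_add hadd.
  - by move=> s c; rewrite /psi constM_scale // hsc.
  - by move=> v; case: (hsur v) => a <-; exists (headV a); rewrite phi_head.
have hhead : forall a, K a -> headV a = V0 p m.
  move=> a ha; apply: hinj; rewrite -phi_head; apply/hker.
  by exists a, (M0 p m); split => //; rewrite Mzeta_M0 // M_add0.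
have main : forall n a, K a -> forall j i, i < n -> a j i = zp0 p.
  elim=> [|n IH] a ha j i // hi.
  have hz := hhead a ha.
  have ea := head_zero hp0 hz.
  case: i hi => [|i] hi.
    by have := congr1 (fun f => f j) hz.
  have hs : K (shiftM a) by apply: h2; rewrite -ea.
  exact: (IH _ hs j i hi).
move=> a ha; apply: functional_extensionality => j; apply: functional_extensionality => i.
exact: (main i.+1 a ha j i (ltnSn i)).
Qed.
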